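(* Consider a market with $N$ players and $K\ge N$ arms in which every player has a strict preference order over arms and every arm has a strict preference order over players, and run the player-proposing Gale–Shapley (deferred acceptance) algorithm. Then at most $N$ proposals are made per player before termination. Consequently, each player's optimal stable match (its match in the player-optimal stable matching) is among its top $N$ preferred arms.
   Context: In player-proposing Gale–Shapley, each currently unmatched player proposes to its most preferred arm it has not yet proposed to; each arm tentatively holds the best proposer it has received (according to its strict preferences) and rejects the others; the algorithm terminates when every player is tentatively matched (or has exhausted its list), and outputs the player-optimal stable matching. *)

(* Defs.v *)
From mathcomp Require Import all_boot all_fingroup.
Set Implicit Arguments. Unset Strict Implicit. Unset Printing Implicit Defensive.

(* Player preferences: rankP i : {perm 'I_K}, rankP i a = rank of arm a in
   player i's strict order (0 = most preferred).
   Arm preferences: rankA a : {perm 'I_N}, rankA a j = rank of player j in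
   arm a's strict order (0 = most preferred). *)

Section GS.
Variables (N K : nat).
Variable rankP : 'I_N -> {perm 'I_K}.
Variable rankA : 'I_K -> {perm 'I_N}.

(* State of the (simultaneous-round) player-proposing Gale-Shapley algorithm:
   nprop i = number of proposals made so far by player i (so i has proposed
   exactly to its arms of rank 0 .. nprop i - 1);
   hold a = player tentatively held by arm a (if any). *)
Record gs_state := GSState { nprop : 'I_N -> nat; hold : 'I_K -> option 'I_N }.

Definition gs_init : gs_state := GSState (fun _ => 0) (fun _ => None).

Definition gs_free (s : gs_state) (i : 'I_N) : bool :=
  ~~ [exists a, hold s a == Some i].

(* in the current round, player j proposes to arm a: j is unmatched and a is
   its most preferred arm not yet proposed to (if j's list is exhausted, no
   arm has rank nprop j, so j makes no proposal) *)
Definition gs_proposes (s : gs_state) (j : 'I_N) (a : 'I_K) : bool :=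
  gs_free s j && (rankP j a == nprop s j :> nat).

Definition gs_cand (s : gs_state) (a : 'I_K) (j : 'I_N) : bool :=
  (hold s a == Some j) || gs_proposes s j a.

Definition gs_step (s : gs_state) : gs_state :=
  GSState
    (fun i => if [exists a, gs_proposes s i a] then (nprop s i).+1 else nprop s i)
    (fun a => [pick j | gs_cand s a j &&
                        [forall j', gs_cand s a j' ==> (rankA a j <= rankA a j')]]).

(* state after n rounds (once terminated, rounds change nothing) *)
Definition gs_run (n : nat) : gs_state := iter n gs_step gs_init.

Definition is_matching (mu : 'I_N -> option 'I_K) : Prop :=
  forall i j a, mu i = Some a -> mu j = Some a -> i = j.

Definition blocking (mu : 'I_N -> option 'I_K) (i : 'I_N) (a : 'I_K) : Prop :=
  (mu i = None \/ exists b, mu i = Some b /\ rankP i a < rankP i b) /\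
  (forall j, mu j = Some a -> rankA a i < rankA a j).

Definition stable (mu : 'I_N -> option 'I_K) : Prop :=
  is_matching mu /\ forall i a, ~ blocking mu i a.

Definition weakly_prefers (i : 'I_N) (o1 o2 : option 'I_K) : bool :=
  match o1, o2 with
  | Some a, Some b => rankP i a <= rankP i b
  | Some _, None => true
  | None, None => true
  | None, Some _ => false
  end.

Definition player_optimal_stable (mu : 'I_N -> option 'I_K) : Prop :=
  stable mu /\ forall nu, stable nu -> forall i, weakly_prefers i (mu i) (nu i).

End GS.

(* Main.v *)
Require Import Defs.
From mathcomp Require Import all_boot all_fingroup.
Set Implicit Arguments. Unset Strict Implicit. Unset Printing Implicit Defensive.

Lemma inj_bound (N m : nat) (f : 'I_m -> 'I_N) : injective f -> m <= N.
Proof. by move=> inj; have := leq_card f inj; rewrite !card_ord. Qed.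

Section Proofs.
Variables (N K : nat).
Variable rankP : 'I_N -> {perm 'I_K}.
Variable rankA : 'I_K -> {perm 'I_N}.

Definition Inv (s : gs_state N K) : Prop :=
  [/\ (forall a b j, hold s a = Some j -> hold s b = Some j -> a = b),
      (forall i, nprop s i <= K) &
      (forall i b, rankP i b < nprop s i -> hold s b != None)].

Lemma step_cand s a j :
  hold (gs_step rankP rankA s) a = Some j -> gs_cand rankP s a j.
Proof.
rewrite /gs_step /=; case: pickP => // x /andP [Hc _] [<-]; exact: Hc.
Qed.

Lemma step_held s a j : gs_cand rankP s a j -> hold (gs_step rankP rankA s) a != None.
Proof.
move=> Hc; rewrite /gs_step /=; case: pickP => // H.
case: (arg_minnP (fun j => rankA a j) Hc) => k Hk Hmin.
have := H k; rewrite Hk /=; suff -> : [forall j', gs_cand rankP s a j' ==> (rankA a k <= rankA a j')] by []; apply/forallP => j'.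
by apply/implyP => /Hmin.
Qed.

Lemma inv_init : Inv (gs_init N K).
Proof. by split => //= i b; rewrite ltn0. Qed.

Lemma inv_step s : Inv s -> Inv (gs_step rankP rankA s).
Proof.
case=> [H1 H2 H3]; split.
- move=> a b j /step_cand Ha /step_cand Hb.
  move: Ha Hb; rewrite /gs_cand /gs_proposes /gs_free.
  case/orP => [/eqP Ha|/andP [Hf Ra]]; case/orP => [/eqP Hb|/andP [Hf' Rb]].
  + exact: H1 Ha Hb.
  + by move: Hf'; rewrite negb_exists => /forallP /(_ a); rewrite Ha eqxx.
  + by move: Hf; rewrite negb_exists => /forallP /(_ b); rewrite Hb eqxx.
  + apply: (perm_inj (s:=rankP j)); apply: val_inj => /=.
    by rewrite (eqP Ra) (eqP Rb).
- move=> i /=; case: ifP => [Hx|_]; last exact: H2.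
  move: Hx; case/existsP => a /andP [_ /eqP <-]; exact: ltn_ord.
- have keep b : hold s b != None -> hold (gs_step rankP rankA s) b != None.
    case E: (hold s b) => [j|] // _; apply: (step_held (j:=j)).
    by rewrite /gs_cand E eqxx.
  move=> i b /=; case: ifP => [/existsP [a Ha]|_] Hb; last exact: keep (H3 _ _ Hb).
  move: Hb; rewrite ltnS leq_eqVlt => /orP [/eqP Eb|Hb]; last exact: keep (H3 _ _ Hb).
  have Eab : b = a.
    apply: (perm_inj (s:=rankP i)); apply: val_inj => /=.
    by move: Ha => /andP [_ /eqP ->].
  subst b; apply: (step_held (j:=i)); by rewrite /gs_cand Ha orbT.
Qed.

Lemma inv_run n : Inv (gs_run rankP rankA n).
Proof.
elim: n => [|n IH]; first exact: inv_init.
by rewrite /gs_run iterS; apply: inv_step.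
Qed.

Lemma nprop_bound s : Inv s -> forall i, nprop s i <= N.
Proof.
case=> H1 H2 H3 i; rewrite leqNgt; apply/negP => Hlt.
have HNK1 : N < K := leq_trans Hlt (H2 i).
pose g (k : 'I_N.+1) : 'I_K := ((rankP i)^-1)%g (widen_ord HNK1 k).
have Hg k : hold s (g k) != None.
  by apply: (H3 i); rewrite /g /= permKV /=; exact: leq_trans (ltn_ord k) Hlt.
case E0: (hold s (g ord0)) => [j0|]; last by move: (Hg ord0); rewrite E0.
pose h k := odflt j0 (hold s (g k)).
have: injective h.
  move=> k1 k2; rewrite /h.
  case E1: (hold s (g k1)) => [x1|]; last by move: (Hg k1); rewrite E1.
  case E2: (hold s (g k2)) => [x2|]; last by move: (Hg k2); rewrite E2.
  move=> /= e; subst x2; have := H1 _ _ _ E1 E2; rewrite /g.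
  move/perm_inj => /(congr1 val) /= e; exact: val_inj.
by move/inj_bound; rewrite ltnn.
Qed.

Lemma count_bad (hNK : N <= K) (mu : 'I_N -> option 'I_K) (i : 'I_N) :
  (forall b, rankP i b < N -> (exists j, mu j = Some b) /\ mu i != Some b) -> False.
Proof.
move=> bad.
pose g (k : 'I_N) : 'I_K := ((rankP i)^-1)%g (widen_ord hNK k).
have Hg k : (exists j, mu j = Some (g k)) /\ mu i != Some (g k).
  by apply: bad; rewrite /g /= permKV /=.
pose f k := odflt i [pick j | mu j == Some (g k)].
have Hf k : mu (f k) = Some (g k) /\ f k != i.
  rewrite /f; case: pickP => [j /eqP Ej|H] /=.
    split => //; apply/eqP => eji; subst j.
    by case: (Hg k) => _; rewrite Ej eqxx.
  by case: (Hg k) => [[j Ej] _]; move: (H j); rewrite Ej eqxx.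
have injf : injective f.
  move=> k1 k2 e; have := (Hf k1).1; rewrite e (Hf k2).1 => -[].
  rewrite /g; move/perm_inj => /(congr1 val) /= e'; exact: val_inj.
have := injF_onto injf i; case/codomP => k ek.
by case: (Hf k) => _; rewrite -ek eqxx.
Qed.
End Proofs.

Theorem lemmaB3 (N K : nat) (rankP : 'I_N -> {perm 'I_K})
    (rankA : 'I_K -> {perm 'I_N}) (hNK : N <= K) :
  (forall (n : nat) (i : 'I_N), nprop (gs_run rankP rankA n) i <= N) /\
  (forall mu : 'I_N -> option 'I_K, player_optimal_stable rankP rankA mu ->
     forall i : 'I_N, exists a : 'I_K, mu i = Some a /\ rankP i a < N).
Proof.
split.
  by move=> n i; apply: nprop_bound; apply: inv_run.
move=> mu [[Hm Hst] _] i.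
have key : (forall b, rankP i b < N -> ~~ weakly_prefers rankP i (mu i) (Some b)) ->
    False.
  move=> Hw; apply: (@count_bad N K rankP hNK mu i) => b Hb.
  have Hwb := Hw b Hb; split; last first.
    by apply/eqP => E; move: Hwb; rewrite E /= leqnn.
  case: (boolP [exists j, (mu j == Some b) && ~~ (rankA b i < rankA b j)]).
    by case/existsP => j /andP [/eqP Ej _]; exists j.
  rewrite negb_exists => /forallP Hall; exfalso; apply: (Hst i b); split.
    move: Hwb; case: (mu i) => [a|] /=; last by left.
    by rewrite -ltnNge => H; right; exists a.
  by move=> j Ej; have := Hall j; rewrite Ej eqxx /= negbK.
case E: (mu i) => [a|]; last first.
  by exfalso; apply: key => b _; rewrite E.
case: (ltnP (rankP i a) N) => h; first by exists a.
exfalso; apply: key => b Hb; rewrite E /= -ltnNge.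
exact: leq_trans Hb h.
Qed.
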